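(* Consider the MaxWeight scheduling system described in the context, with $\boldsymbol\lambda^{(\epsilon)}=\boldsymbol\lambda^{(k)}-\epsilon\mathbf c^{(k)}$, and let $\overline{\mathbf S}$ be the service vector selected by MaxWeight in a slot when the queue-length vector is $\overline{\mathbf Q}^{(\epsilon)}$ (stationary). Then for any $r'>1$ there exist constants $\beta_2<\infty$ and $\epsilon_0>0$, independent of $\epsilon$, such that for all $\epsilon\in(0,\epsilon_0)$, $$\mathbb E\Big[\big(b^{(k)}-\langle\mathbf c^{(k)},\overline{\mathbf S}\rangle\big)^{r'}\Big]\le\beta_2\,\epsilon .$$
   Context: Scheduling system: time is slotted; there are $N$ queues. Arrivals $A_n(t)$ are independent across $n$, i.i.d. over time, nonnegative integer-valued with $A_n(t)\le A_{max}$, with mean vector $\boldsymbol\lambda^{(\epsilon)}$. $\mathcal S\subset\mathbb Z_{\ge0}^N$ is a finite set of feasible service vectors with entries at most $S_{max}$. In each slot a service vector $\mathbf S(t)\in\mathcal S$ is chosen, and $Q_n(t+1)=Q_n(t)+A_n(t)-S_n(t)+U_n(t)$ with $U_n(t)=\max(S_n(t)-A_n(t)-Q_n(t),0)$. The capacity region $\mathcal R=\mathrm{ConvexHull}(\mathcal S)$ is the polyhedron $\{\mathbf r\ge0:\langle\mathbf c^{(j)},\mathbf r\rangle\le b^{(j)},\ j=1,\dots,K\}$, where each $\mathbf c^{(j)}\in\mathbb R^N_{\ge0}$ has Euclidean norm $1$ and $b^{(j)}>0$. The $k$th face is $\mathcal F^{(k)}=\{\mathbf r\in\mathcal R:\langle\mathbf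 c^{(k)},\mathbf r\rangle=b^{(k)}\}$; a face index $k$ and a point $\boldsymbol\lambda^{(k)}$ in the relative interior of $\mathcal F^{(k)}$ are fixed. MaxWeight policy: $\mathbf S(t)$ is chosen uniformly at random from $\arg\max_{\mathbf S\in\mathcal S}\langle\mathbf Q(t),\mathbf S\rangle$. $\overline{\mathbf Q}^{(\epsilon)}$ is distributed according to the stationary distribution of the queue-length chain under MaxWeight. *)

(* Defs.v *)
From Stdlib Require Import Reals Lra List.
Import ListNotations.
Open Scope R_scope.

Fixpoint sumR (l : list R) : R :=
  match l with [] => 0 | x :: t => x + sumR t end.

Definition dotR (x y : list R) : R :=
  sumR (map (fun p => fst p * snd p) (combine x y)).

Definition toR (v : list nat) : list R := map INR v.

Definition norm2 (x : list R) : R := sqrt (dotR x x).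

Definition vsub (x y : list R) : list R :=
  map (fun p => fst p - snd p) (combine x y).

Definition dist (x y : list R) : R := norm2 (vsub x y).

(* ---------- sums of NONNEGATIVE terms over a countable set ----------
   s is the sum of f over {x | P x}: the least upper bound of all finite
   partial sums over duplicate-free lists of elements satisfying P.
   (Only used with nonnegative f.) *)
Definition has_sum_on {T : Type} (P : T -> Prop) (f : T -> R) (s : R) : Prop :=
  is_lub (fun r => exists l : list T,
             NoDup l /\ Forall P l /\ r = sumR (map f l)) s.

Definition in_conv_hull (N : nat) (Sset : list (list nat)) (r : list R) : Prop :=
  length r = N /\
  exists w : list R,
    length w = length Sset /\ Forall (fun x => 0 <= x) w /\ sumR w = 1 /\
    forall n, (n < N)%nat ->
      nth n r 0 = sumR (map (fun p => fst p * INR (nth n (snd p) 0%nat))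
                            (combine w Sset)).

Definition in_affine_hull (N : nat) (F : list R -> Prop) (mu : list R) : Prop :=
  length mu = N /\
  exists (xs : list (list R)) (t : list R),
    length t = length xs /\ Forall F xs /\ sumR t = 1 /\
    forall n, (n < N)%nat ->
      nth n mu 0 = sumR (map (fun p => fst p * nth n (snd p) 0) (combine t xs)).

Definition in_rel_interior (N : nat) (F : list R -> Prop) (x : list R) : Prop :=
  F x /\ exists d, 0 < d /\
    forall mu, in_affine_hull N F mu -> dist mu x < d -> F mu.

Definition face (N : nat) (Sset : list (list nat)) (c : list R) (b : R)
  (r : list R) : Prop :=
  in_conv_hull N Sset r /\ dotR c r = b.

Definition weight (Q S : list nat) : nat :=
  fold_right Nat.add 0%nat (map (fun p => (fst p * snd p)%nat) (combine Q S)).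

Definition maxweight (Sset : list (list nat)) (Q : list nat) : nat :=
  fold_right Nat.max 0%nat (map (weight Q) Sset).

Definition argmax (Sset : list (list nat)) (Q : list nat) : list (list nat) :=
  filter (fun S => Nat.eqb (weight Q S) (maxweight Sset Q)) Sset.

Fixpoint vecs_upto (n m : nat) : list (list nat) :=
  match n with
  | O => [[]]
  | S n' => flat_map (fun a => map (cons a) (vecs_upto n' m)) (seq 0 (S m))
  end.

(* independent arrivals: joint pmf is the product of the marginals pA n *)
Definition joint_prob (pA : nat -> nat -> R) (a : list nat) : R :=
  fold_right Rmult 1
    (map (fun p => pA (fst p) (snd p)) (combine (seq 0 (length a)) a)).

(* Q(t+1) = Q + A - S + U = max(Q + A - S, 0) componentwise (truncated nat subtraction) *)
Definition next_state (Q a S : list nat) : list nat :=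
  map (fun p => (fst p + fst (snd p) - snd (snd p))%nat) (combine Q (combine a S)).

(* one-step transition probability of the queue-length chain under MaxWeight
   (service vector uniform over the argmax set) *)
Definition trans (N Amax : nat) (Sset : list (list nat)) (pA : nat -> nat -> R)
  (Q Q' : list nat) : R :=
  let M := argmax Sset Q in
  sumR (map (fun S => / INR (length M) *
     sumR (map (fun a => if list_eq_dec Nat.eq_dec (next_state Q a S) Q'
                         then joint_prob pA a else 0)
               (vecs_upto N Amax))) M).

Definition is_stationary (N Amax : nat) (Sset : list (list nat))
  (pA : nat -> nat -> R) (pi : list nat -> R) : Prop :=
  (forall Q, 0 <= pi Q) /\
  (forall Q, length Q <> N -> pi Q = 0) /\
  has_sum_on (fun Q => length Q = N) pi 1 /\
  forall Q', length Q' = N ->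
    has_sum_on (fun Q => length Q = N)
               (fun Q => pi Q * trans N Amax Sset pA Q Q') (pi Q').

Definition valid_arrivals (N Amax : nat) (pA : nat -> nat -> R) (lam : list R) : Prop :=
  forall n, (n < N)%nat ->
    (forall a, 0 <= pA n a) /\
    (forall a, (Amax < a)%nat -> pA n a = 0) /\
    sumR (map (pA n) (seq 0 (S Amax))) = 1 /\
    sumR (map (fun a => INR a * pA n a) (seq 0 (S Amax))) = nth n lam 0.

(* real power of a nonnegative base, with 0^y = 0 *)
Definition rpow (x y : R) : R :=
  if Rle_dec x 0 then 0 else Rpower x y.

(* E[(b - <c, S>)^r' | Q] with S uniform on the MaxWeight argmax set *)
Definition unused_moment (Sset : list (list nat)) (c : list R) (b r' : R)
  (Q : list nat) : R :=
  let M := argmax Sset Q in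
  sumR (map (fun S => / INR (length M) * rpow (b - dotR c (toR S)) r') M).

(* Main.v *)
Require Import Defs.
From Stdlib Require Import Reals Lra List Classical Lia.
Import ListNotations.
Open Scope R_scope.

Lemma sumR_app l1 l2 : sumR (l1 ++ l2) = sumR l1 + sumR l2.
Proof. induction l1; simpl; [lra|rewrite IHl1; lra]. Qed.

Lemma sumR_ext {A} (f g : A -> R) l :
  (forall x, In x l -> f x = g x) -> sumR (map f l) = sumR (map g l).
Proof.
  induction l; simpl; intros H; auto.
  rewrite H by auto. rewrite IHl by auto. reflexivity.
Qed.

Lemma sumR_le {A} (f g : A -> R) l :
  (forall x, In x l -> f x <= g x) -> sumR (map f l) <= sumR (map g l).
Proof.
  induction l; simpl; intros H; [lra|].
  assert (sumR (map f l) <= sumR (map g l)) by (apply IHl; intros; apply H; simpl; auto).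
  specialize (H a (or_introl eq_refl)). lra.
Qed.

Lemma sumR_nonneg {A} (f : A -> R) l :
  (forall x, In x l -> 0 <= f x) -> 0 <= sumR (map f l).
Proof.
  intros H. replace 0 with (sumR (map (fun _ : A => 0) l)).
  apply sumR_le; auto. induction l; simpl; auto. rewrite IHl; auto. lra. intros; apply H; simpl; auto.
Qed.

Lemma sumR_plus {A} (f g : A -> R) l :
  sumR (map (fun x => f x + g x) l) = sumR (map f l) + sumR (map g l).
Proof. induction l; simpl; [lra| rewrite IHl; lra]. Qed.

Lemma sumR_minus {A} (f g : A -> R) l :
  sumR (map (fun x => f x - g x) l) = sumR (map f l) - sumR (map g l).
Proof. induction l; simpl; [lra| rewrite IHl; lra]. Qed.

Lemma sumR_mull {A} (f : A -> R) r l :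
  sumR (map (fun x => r * f x) l) = r * sumR (map f l).
Proof. induction l; simpl; [lra| rewrite IHl; lra]. Qed.

Lemma sumR_mulr {A} (f : A -> R) r l :
  sumR (map (fun x => f x * r) l) = sumR (map f l) * r.
Proof. induction l; simpl; [lra| rewrite IHl; lra]. Qed.

Lemma sumR_const {A} r (l : list A) :
  sumR (map (fun _ => r) l) = INR (length l) * r.
Proof. induction l; simpl length; [simpl; lra|]. rewrite S_INR. simpl. rewrite IHl. lra. Qed.

Lemma sumR_swap {A B} (F : A -> B -> R) l1 l2 :
  sumR (map (fun x => sumR (map (fun y => F x y) l2)) l1) =
  sumR (map (fun y => sumR (map (fun x => F x y) l1)) l2).
Proof.
  induction l1; simpl.
  - induction l2; simpl; auto. rewrite <- IHl2; lra.
  - rewrite IHl1. rewrite <- sumR_plus. reflexivity.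
Qed.

Lemma sumR_flat_map {A B} (f : B -> R) (g : A -> list B) l :
  sumR (map f (flat_map g l)) = sumR (map (fun x => sumR (map f (g x))) l).
Proof. induction l; simpl; auto. rewrite map_app, sumR_app, IHl. reflexivity. Qed.

Lemma sumR_map_map {A B} (f : B -> R) (g : A -> B) l :
  sumR (map f (map g l)) = sumR (map (fun x => f (g x)) l).
Proof. rewrite map_map. reflexivity. Qed.

Lemma sumR_single {A} (F : A -> R) l x :
  NoDup l -> In x l -> (forall y, y <> x -> F y = 0) -> sumR (map F l) = F x.
Proof.
  induction l as [|a l IH]; simpl; intros Hnd Hin H; [tauto|].
  inversion Hnd; subst.
  destruct Hin as [<-|Hin].
  - rewrite (sumR_ext _ (fun _ => 0)). rewrite sumR_const. lra.
    intros y Hy. apply H. intros ->. tauto.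
  - rewrite IH; auto. rewrite H. lra. intros ->; tauto.
Qed.

Lemma sumR_incl {A} (f : A -> R) l1 l2 :
  NoDup l1 -> NoDup l2 -> incl l1 l2 -> (forall x, In x l2 -> 0 <= f x) ->
  sumR (map f l1) <= sumR (map f l2).
Proof.
  revert l2. induction l1 as [|a l1 IH]; simpl; intros l2 H1 H2 Hi Hf.
  - apply sumR_nonneg; auto.
  - inversion H1; subst.
    assert (Ha : In a l2) by (apply Hi; simpl; auto).
    destruct (in_split _ _ Ha) as [x [y ->]].
    rewrite map_app, sumR_app. simpl.
    assert (sumR (map f l1) <= sumR (map f (x ++ y))).
    { apply IH; auto. eapply NoDup_remove_1; eauto.
      intros z Hz. assert (In z (x ++ a :: y)) by (apply Hi; simpl; auto).
      apply in_app_or in H. apply in_or_app. simpl in H. destruct H as [H|[H|H]]; auto.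
      subst; tauto.
      intros z Hz; apply Hf. apply in_app_or in Hz. apply in_or_app; simpl; tauto. }
    rewrite map_app, sumR_app in H. lra.
Qed.

Lemma sumR_filter {A} (f : A -> R) (p : A -> bool) l :
  sumR (map (fun x => if p x then f x else 0) l) = sumR (map f (filter p l)).
Proof. induction l; simpl; auto. destruct (p a); simpl; rewrite IHl; lra. Qed.

Lemma sumR_elem_le {A} (f : A -> R) l x :
  In x l -> (forall y, In y l -> 0 <= f y) -> f x <= sumR (map f l).
Proof.
  induction l; simpl; intros Hin H; [tauto|].
  destruct Hin as [->|Hin].
  - assert (0 <= sumR (map f l)) by (apply sumR_nonneg; auto). lra.
  - assert (0 <= f a) by auto. assert (f x <= sumR (map f l)) by auto. lra.
Qed.

Lemma le_eps (x y : R) : (forall eta, 0 < eta -> x <= y + eta) -> x <= y.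
Proof.
  intros H. destruct (Rle_dec x y); auto.
  specialize (H ((x - y)/2)). lra.
Qed.

Lemma lub_ub {T} (P : T -> Prop) f s l :
  has_sum_on P f s -> NoDup l -> Forall P l -> sumR (map f l) <= s.
Proof. intros [H _] Hn Hf. apply H. exists l; auto. Qed.

Lemma lub_approx {T} (P : T -> Prop) f s d :
  has_sum_on P f s -> 0 < d ->
  exists l, NoDup l /\ Forall P l /\ s - d < sumR (map f l).
Proof.
  intros [H1 H2] Hd. apply NNPP; intro Hn.
  assert (s <= s - d); [|lra].
  apply H2. intros r [l [Hl [Hf ->]]].
  destruct (Rle_dec (sumR (map f l)) (s - d)); auto.
  exfalso; apply Hn; exists l; split; auto; split; auto; lra.
Qed.

Lemma dotR_nth c x N : length c = N -> length x = N ->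
  dotR c x = sumR (map (fun i => nth i c 0 * nth i x 0) (seq 0 N)).
Proof.
  revert x N. induction c as [|a c IH]; intros x N Hc Hx; simpl in Hc; subst.
  - reflexivity.
  - destruct x as [|y x]; simpl in Hx; [lia|]. injection Hx as Hx.
    unfold dotR in *. simpl. rewrite (IH x (length c)) by auto.
    rewrite <- seq_shift, map_map. simpl. reflexivity.
Qed.

Lemma nth_toR Q i : nth i (toR Q) 0 = INR (nth i Q 0%nat).
Proof. unfold toR. apply (map_nth INR Q 0%nat i). Qed.

Lemma length_toR Q : length (toR Q) = length Q.
Proof. unfold toR; apply length_map. Qed.

Lemma length_next Q a S N : length Q = N -> length a = N -> length S = N ->
  length (next_state Q a S) = N.
Proof. intros. unfold next_state. rewrite length_map, !length_combine. lia. Qed.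

Lemma nth_next Q a S i N : length Q = N -> length a = N -> length S = N -> (i < N)%nat ->
  nth i (next_state Q a S) 0%nat = (nth i Q 0 + nth i a 0 - nth i S 0)%nat.
Proof.
  intros. unfold next_state.
  change 0%nat with ((fun p : nat * (nat * nat) => (fst p + fst (snd p) - snd (snd p))%nat) (0%nat,(0%nat,0%nat))) at 1.
  rewrite map_nth. rewrite combine_nth by (rewrite length_combine; lia).
  rewrite combine_nth by lia. reflexivity.
Qed.

Lemma vecs_prop n m a : In a (vecs_upto n m) ->
  length a = n /\ forall i, (nth i a 0 <= m)%nat.
Proof.
  revert a. induction n; cbn [vecs_upto]; intros a H.
  - destruct H as [<-|[]]. split; auto. intros [|i]; simpl; lia.
  - apply in_flat_map in H. destruct H as [x [Hx H]]. apply in_map_iff in H.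
    destruct H as [a' [<- Ha']]. apply in_seq in Hx. destruct (IHn a' Ha') as [H1 H2].
    split; simpl; auto. intros [|i]; simpl; auto; lia.
Qed.

Definition jpk (pA : nat -> nat -> R) (k : nat) (a : list nat) : R :=
  fold_right Rmult 1 (map (fun p => pA (fst p) (snd p)) (combine (seq k (length a)) a)).

Lemma jpk_cons pA k x a : jpk pA k (x :: a) = pA k x * jpk pA (S k) a.
Proof. reflexivity. Qed.

Lemma jpk_vecs_sum pA n m k :
  (forall j, (k <= j < k + n)%nat -> sumR (map (pA j) (seq 0 (S m))) = 1) ->
  sumR (map (jpk pA k) (vecs_upto n m)) = 1.
Proof.
  revert k. induction n; intros k H.
  - simpl. unfold jpk. simpl. lra.
  - cbn [vecs_upto]. rewrite sumR_flat_map.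
    rewrite (sumR_ext _ (fun x => pA k x * 1)).
    + rewrite sumR_mulr. rewrite H by lia. lra.
    + intros x _. rewrite sumR_map_map.
      rewrite (sumR_ext _ (fun a => pA k x * jpk pA (S k) a)) by (intros; apply jpk_cons).
      rewrite sumR_mull, IHn; auto. intros j Hj; apply H; lia.
Qed.

Lemma jpk_vecs_mean pA n m k i :
  (forall j, (k <= j < k + n)%nat -> sumR (map (pA j) (seq 0 (S m))) = 1) ->
  (i < n)%nat ->
  sumR (map (fun a => jpk pA k a * INR (nth i a 0%nat)) (vecs_upto n m)) =
  sumR (map (fun x => INR x * pA (k + i)%nat x) (seq 0 (S m))).
Proof.
  revert k i. induction n; intros k i H Hi; [lia|].
  cbn [vecs_upto]. rewrite sumR_flat_map.
  destruct i as [|i].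
  - apply sumR_ext. intros x _. rewrite sumR_map_map.
    rewrite (sumR_ext _ (fun a => (pA k x * INR x) * jpk pA (S k) a)).
    rewrite sumR_mull, jpk_vecs_sum. rewrite Nat.add_0_r; lra.
    intros j Hj; apply H; lia.
    intros a _. rewrite jpk_cons. simpl nth. lra.
  - rewrite (sumR_ext _ (fun x => pA k x * sumR (map (fun y => INR y * pA (S k + i)%nat y) (seq 0 (S m))))).
    + rewrite sumR_mulr, H by lia. replace (k + S i)%nat with (S k + i)%nat by lia. lra.
    + intros x _. rewrite sumR_map_map.
      rewrite (sumR_ext _ (fun a => pA k x * (jpk pA (S k) a * INR (nth i a 0%nat)))).
      rewrite sumR_mull, IHn; auto. intros j Hj; apply H; lia. lia.
      intros a _. rewrite jpk_cons. simpl nth. lra.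
Qed.

Lemma jpk_nonneg pA n m k a :
  (forall j x, (k <= j < k + n)%nat -> 0 <= pA j x) ->
  In a (vecs_upto n m) -> 0 <= jpk pA k a.
Proof.
  revert k a. induction n; intros k a H Ha; cbn [vecs_upto] in Ha.
  - destruct Ha as [<-|[]]. unfold jpk; simpl; lra.
  - apply in_flat_map in Ha. destruct Ha as [x [_ Ha]]. apply in_map_iff in Ha.
    destruct Ha as [a' [<- Ha']]. rewrite jpk_cons. apply Rmult_le_pos. apply H; lia.
    apply (IHn (S k)); auto. intros; apply H; lia.
Qed.

Lemma joint_jpk pA a : joint_prob pA a = jpk pA 0 a.
Proof. reflexivity. Qed.

Lemma argmax_sub Sset Q S : In S (argmax Sset Q) -> In S Sset.
Proof. unfold argmax. rewrite filter_In. tauto. Qed.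

Lemma maxweight_attained Sset Q : Sset <> [] ->
  exists S, In S Sset /\ weight Q S = maxweight Sset Q.
Proof.
  unfold maxweight. induction Sset as [|s rest IH]; intros H; [tauto|].
  destruct rest as [|s' rest'].
  - exists s. simpl. split; auto. lia.
  - destruct IH as [S [HS HW]]. discriminate.
    simpl map. simpl fold_right. simpl map in HW. simpl fold_right in HW.
    destruct (Nat.max_dec (weight Q s) (Nat.max (weight Q s') (fold_right Nat.max 0%nat (map (weight Q) rest')))) as [E|E];
    rewrite E.
    + exists s; simpl; auto.
    + exists S; split; [right; auto| auto].
Qed.

Lemma argmax_ne Sset Q : Sset <> [] -> argmax Sset Q <> [].
Proof.
  intros H. destruct (maxweight_attained Sset Q H) as [S [HS HW]].
  assert (In S (argmax Sset Q)). { unfold argmax. apply filter_In. split; auto. apply Nat.eqb_eq; auto. }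
  intros E; rewrite E in H0; auto.
Qed.

Lemma wavg_const {A} (M : list A) r : M <> [] ->
  sumR (map (fun _ => / INR (length M) * r) M) = r.
Proof.
  intros H. rewrite sumR_const. destruct M; [tauto|].
  assert (INR (length (a :: M)) <> 0) by (apply not_0_INR; simpl; lia).
  rewrite <- Rmult_assoc, Rinv_r; auto. lra.
Qed.

Lemma wavg_le {A} (M : list A) f g : M <> [] -> (forall x, In x M -> f x <= g x) ->
  sumR (map (fun S => / INR (length M) * f S) M) <= sumR (map (fun S => / INR (length M) * g S) M).
Proof.
  intros H H2. apply sumR_le. intros. apply Rmult_le_compat_l; auto.
  destruct M; [tauto|]. left. apply Rinv_0_lt_compat. apply lt_0_INR. simpl; lia.
Qed.

Lemma wavg_plus {A} (M : list A) f r : M <> [] ->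
  sumR (map (fun S => / INR (length M) * (f S + r)) M) =
  sumR (map (fun S => / INR (length M) * f S) M) + r.
Proof.
  intros H. pose proof (wavg_const M r H) as E.
  transitivity (sumR (map (fun S => / INR (length M) * f S) M) + sumR (map (fun _ => / INR (length M) * r) M)).
  rewrite <- sumR_plus. apply sumR_ext; intros; lra. rewrite E; reflexivity.
Qed.

Lemma dot_nonneg c x N : length c = N -> length x = N -> Forall (fun v => 0 <= v) c ->
  Forall (fun v => 0 <= v) x -> 0 <= dotR c x.
Proof.
  intros Hc Hx Pc Px. rewrite (dotR_nth c x N) by auto. apply sumR_nonneg.
  intros i Hi. apply in_seq in Hi. rewrite Forall_nth in Pc, Px.
  apply Rmult_le_pos; [apply Pc|apply Px]; lia.
Qed.

Lemma toR_nonneg Q : Forall (fun v => 0 <= v) (toR Q).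
Proof. unfold toR. apply Forall_map. apply Forall_forall. intros; apply pos_INR. Qed.

Lemma V_next_lower c N Amax Q a S :
  length c = N -> Forall (fun v => 0 <= v) c -> length Q = N -> length S = N ->
  In a (vecs_upto N Amax) ->
  dotR c (toR Q) + dotR c (toR a) - dotR c (toR S) <= dotR c (toR (next_state Q a S)).
Proof.
  intros Hc Pc HQ HS Ha. destruct (vecs_prop _ _ _ Ha) as [La Ba].
  rewrite !(dotR_nth c _ N) by (rewrite ?length_toR; auto using length_next).
  rewrite <- sumR_plus, <- sumR_minus. apply sumR_le. intros i Hi. apply in_seq in Hi.
  rewrite !nth_toR. rewrite (nth_next Q a S i N) by (auto; lia).
  rewrite Forall_nth in Pc. assert (0 <= nth i c 0) by (apply Pc; lia).
  destruct (Compare_dec.le_lt_dec (nth i S 0%nat) (nth i Q 0%nat + nth i a 0%nat)).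
  - rewrite minus_INR, plus_INR by auto. lra.
  - replace (nth i Q 0 + nth i a 0 - nth i S 0)%nat with 0%nat by lia.
    assert (INR (nth i Q 0%nat) + INR (nth i a 0%nat) <= INR (nth i S 0%nat)).
    { rewrite <- plus_INR. apply le_INR. lia. }
    simpl INR. nra.
Qed.

Definition Cup (c : list R) (N Amax : nat) : R :=
  sumR (map (fun i => nth i c 0 * INR Amax) (seq 0 N)).

Lemma V_next_upper c N Amax Q a S :
  length c = N -> Forall (fun v => 0 <= v) c -> length Q = N -> length S = N ->
  In a (vecs_upto N Amax) ->
  dotR c (toR (next_state Q a S)) <= dotR c (toR Q) + Cup c N Amax.
Proof.
  intros Hc Pc HQ HS Ha. destruct (vecs_prop _ _ _ Ha) as [La Ba].
  rewrite !(dotR_nth c _ N) by (rewrite ?length_toR; auto using length_next).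
  unfold Cup. rewrite <- sumR_plus. apply sumR_le. intros i Hi. apply in_seq in Hi.
  rewrite !nth_toR. rewrite (nth_next Q a S i N) by (auto; lia).
  rewrite Forall_nth in Pc. assert (0 <= nth i c 0) by (apply Pc; lia).
  assert (INR (nth i Q 0 + nth i a 0 - nth i S 0)%nat <= INR (nth i Q 0%nat) + INR Amax).
  { rewrite <- plus_INR. apply le_INR. specialize (Ba i). lia. }
  nra.
Qed.

Lemma C1_nonneg c N Amax : Forall (fun v => 0 <= v) c -> 0 <= Cup c N Amax.
Proof.
  intros Pc. unfold Cup. apply sumR_nonneg. intros i _. apply Rmult_le_pos; [|apply pos_INR].
  destruct (Compare_dec.lt_dec i (length c)). rewrite Forall_nth in Pc; apply Pc; auto.
  rewrite nth_overflow by lia. lra.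
Qed.

Lemma exp_arrivals N Amax pA lam c :
  valid_arrivals N Amax pA lam -> length c = N -> length lam = N ->
  sumR (map (fun a => joint_prob pA a * dotR c (toR a)) (vecs_upto N Amax)) = dotR c lam.
Proof.
  intros Hv Hc Hl.
  assert (H1 : forall j, (0 <= j < 0 + N)%nat -> sumR (map (pA j) (seq 0 (S Amax))) = 1).
  { intros j Hj. apply Hv; lia. }
  rewrite (sumR_ext _ (fun a => sumR (map (fun i => nth i c 0 * (jpk pA 0 a * INR (nth i a 0%nat))) (seq 0 N)))).
  - rewrite sumR_swap. rewrite (dotR_nth c lam N) by auto. apply sumR_ext. intros i Hi.
    apply in_seq in Hi. rewrite sumR_mull. rewrite jpk_vecs_mean by (auto; lia).
    f_equal. destruct (Hv i ltac:(lia)) as [_ [_ [_ E]]]. rewrite <- E. simpl. reflexivity.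
  - intros a Ha. destruct (vecs_prop _ _ _ Ha) as [La _].
    rewrite (dotR_nth c _ N) by (rewrite ?length_toR; auto). rewrite joint_jpk, <- sumR_mull.
    apply sumR_ext. intros i _. rewrite nth_toR. lra.
Qed.

Lemma sum_arrivals N Amax pA lam :
  valid_arrivals N Amax pA lam ->
  sumR (map (fun a => joint_prob pA a) (vecs_upto N Amax)) = 1.
Proof.
  intros Hv. apply jpk_vecs_sum. intros j Hj. apply Hv; lia.
Qed.

Lemma joint_nonneg N Amax pA lam a :
  valid_arrivals N Amax pA lam -> In a (vecs_upto N Amax) -> 0 <= joint_prob pA a.
Proof.
  intros Hv Ha. apply (jpk_nonneg pA N Amax 0 a); auto. intros j x Hj. apply Hv; lia.
Qed.

Definition phi (Sset : list (list nat)) (c : list R) (b : R) (Q : list nat) : R :=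
  sumR (map (fun S => / INR (length (argmax Sset Q)) * (b - dotR c (toR S))) (argmax Sset Q)).

Definition Pg (N Amax : nat) (Sset : list (list nat)) (pA : nat -> nat -> R)
  (g : list nat -> R) (Q : list nat) : R :=
  sumR (map (fun S => / INR (length (argmax Sset Q)) *
     sumR (map (fun a => joint_prob pA a * g (next_state Q a S)) (vecs_upto N Amax)))
   (argmax Sset Q)).

Lemma drift N Amax Sset pA lam c b eps T Q :
  length c = N -> Forall (fun v => 0 <= v) c ->
  (forall S, In S Sset -> length S = N /\ dotR c (toR S) <= b) ->
  Sset <> [] -> 0 <= b -> 0 <= eps ->
  valid_arrivals N Amax pA lam -> length lam = N -> dotR c lam = b - eps ->
  length Q = N ->
  phi Sset c b Q - eps <=
    Pg N Amax Sset pA (fun Q => Rmin (dotR c (toR Q)) T) Q - Rmin (dotR c (toR Q)) T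
    + 2 * b * (if Rle_dec (dotR c (toR Q)) (T - Cup c N Amax) then 0 else 1).
Proof.
  intros Hc Pc HS Hne Hb He Hv Hl Hlam HQ.
  pose proof (argmax_ne Sset Q Hne) as HM.
  assert (HS' : forall S, In S (argmax Sset Q) -> length S = N /\ 0 <= dotR c (toR S) <= b).
  { intros S HSm. apply argmax_sub in HSm. destruct (HS S HSm) as [L1 L2]. repeat split; auto.
    apply (dot_nonneg c _ N); rewrite ?length_toR; auto using toR_nonneg. }
  pose proof (sum_arrivals N Amax pA lam Hv) as Hsum0.
  assert (Hsum : sumR (map (joint_prob pA) (vecs_upto N Amax)) = 1) by exact Hsum0.
  pose proof (exp_arrivals N Amax pA lam c Hv Hc Hl) as Hexp.
  pose proof (C1_nonneg c N Amax Pc) as HC1.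
  remember (dotR c (toR Q)) as VQ eqn:EVQ.
  assert (HVQ : 0 <= VQ) by (rewrite EVQ; apply (dot_nonneg c _ N); rewrite ?length_toR; auto using toR_nonneg).
  unfold Pg, phi.
  destruct (Rle_dec VQ (T - Cup c N Amax)) as [Hgood|Hbad].
  - rewrite (Rmin_left VQ T) by lra.
    assert (sumR (map (fun S => / INR (length (argmax Sset Q)) * ((b - dotR c (toR S)) + (VQ - eps))) (argmax Sset Q))
            <= sumR (map (fun S => / INR (length (argmax Sset Q)) *
     sumR (map (fun a => joint_prob pA a * (fun Q0 => Rmin (dotR c (toR Q0)) T) (next_state Q a S)) (vecs_upto N Amax)))
   (argmax Sset Q))).
    { apply wavg_le; auto. intros S HSm. destruct (HS' S HSm) as [LS _].
      apply Rle_trans with (sumR (map (fun a => joint_prob pA a * (VQ + dotR c (toR a) - dotR c (toR S))) (vecs_upto N Amax))).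
      + rewrite (sumR_ext _ (fun a => joint_prob pA a * (VQ - dotR c (toR S)) + joint_prob pA a * dotR c (toR a))) by (intros; lra).
        rewrite sumR_plus, sumR_mulr, Hsum, Hexp. lra.
      + apply sumR_le. intros a Ha. apply Rmult_le_compat_l. eapply joint_nonneg; eauto.
        pose proof (V_next_upper c N Amax Q a S Hc Pc HQ LS Ha).
        pose proof (V_next_lower c N Amax Q a S Hc Pc HQ LS Ha).
        rewrite Rmin_left; rewrite <- ?EVQ in *; lra. }
    rewrite wavg_plus in H by auto. lra.
  - assert (sumR (map (fun S => / INR (length (argmax Sset Q)) * (Rmin VQ T - b)) (argmax Sset Q))
            <= sumR (map (fun S => / INR (length (argmax Sset Q)) *
     sumR (map (fun a => joint_prob pA a * (fun Q0 => Rmin (dotR c (toR Q0)) T) (next_state Q a S)) (vecs_upto N Amax)))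
   (argmax Sset Q))).
    { apply wavg_le; auto. intros S HSm. destruct (HS' S HSm) as [LS DS].
      apply Rle_trans with (sumR (map (fun a => joint_prob pA a * (Rmin VQ T - b)) (vecs_upto N Amax))).
      + rewrite sumR_mulr, Hsum. lra.
      + apply sumR_le. intros a Ha. apply Rmult_le_compat_l. eapply joint_nonneg; eauto.
        pose proof (V_next_lower c N Amax Q a S Hc Pc HQ LS Ha).
        assert (0 <= dotR c (toR a)) by
          (destruct (vecs_prop _ _ _ Ha); apply (dot_nonneg c _ N); rewrite ?length_toR; auto using toR_nonneg).
        rewrite <- ?EVQ in *. pose proof (Rmin_l VQ T). pose proof (Rmin_r VQ T).
        apply Rmin_glb; lra. }
    rewrite (wavg_const _ _ HM) in H.
    assert (sumR (map (fun S => / INR (length (argmax Sset Q)) * (b - dotR c (toR S))) (argmax Sset Q))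
            <= sumR (map (fun S => / INR (length (argmax Sset Q)) * b) (argmax Sset Q))).
    { apply wavg_le; auto. intros S HSm. destruct (HS' S HSm). lra. }
    rewrite (wavg_const _ _ HM) in H0. lra.
Qed.

Definition succs (N Amax : nat) (Sset : list (list nat)) (Q : list nat) : list (list nat) :=
  flat_map (fun S => map (fun a => next_state Q a S) (vecs_upto N Amax)) (argmax Sset Q).

Lemma Pg_trans N Amax Sset pA g Q B :
  NoDup B -> incl (succs N Amax Sset Q) B ->
  Pg N Amax Sset pA g Q = sumR (map (fun Q' => trans N Amax Sset pA Q Q' * g Q') B).
Proof.
  intros HB Hinc. unfold trans, Pg; cbv zeta. set (M := argmax Sset Q). symmetry.
  rewrite (sumR_ext _ (fun Q' => sumR (map (fun S => / INR (length M) *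
     sumR (map (fun a => (if list_eq_dec Nat.eq_dec (next_state Q a S) Q' then joint_prob pA a else 0) * g Q')
       (vecs_upto N Amax))) M))).
  2:{ intros Q' _. rewrite <- sumR_mulr. apply sumR_ext. intros S _. rewrite Rmult_assoc, <- sumR_mulr. reflexivity. }
  rewrite sumR_swap. apply sumR_ext. intros S HS.
  rewrite sumR_mull. f_equal. rewrite sumR_swap. apply sumR_ext. intros a Ha.
  rewrite (sumR_single (fun Q' => (if list_eq_dec Nat.eq_dec (next_state Q a S) Q' then joint_prob pA a else 0) * g Q') B (next_state Q a S)); auto.
  - destruct (list_eq_dec Nat.eq_dec _ _); [reflexivity|tauto].
  - apply Hinc. unfold succs. apply in_flat_map. exists S. split; auto. apply in_map_iff; exists a; auto.
  - intros y Hy. destruct (list_eq_dec Nat.eq_dec _ _); [congruence|lra].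
Qed.

Lemma stat_ineq N Amax Sset pA pi g I B :
  is_stationary N Amax Sset pA pi ->
  NoDup I -> Forall (fun Q => length Q = N) I ->
  NoDup B -> Forall (fun Q => length Q = N) B ->
  (forall Q, In Q I -> incl (succs N Amax Sset Q) B) ->
  (forall Q, 0 <= g Q) ->
  sumR (map (fun Q => pi Q * Pg N Amax Sset pA g Q) I) <= sumR (map (fun Q' => pi Q' * g Q') B).
Proof.
  intros [Hp [_ [_ Hst]]] HI VI HB VB Hs Hg.
  rewrite (sumR_ext _ (fun Q => sumR (map (fun Q' => pi Q * trans N Amax Sset pA Q Q' * g Q') B))).
  2:{ intros Q HQ. rewrite (Pg_trans N Amax Sset pA g Q B HB (Hs Q HQ)). rewrite <- sumR_mull.
      apply sumR_ext; intros; lra. }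
  rewrite sumR_swap. apply sumR_le. intros Q' HQ'.
  rewrite sumR_mulr. rewrite (Rmult_comm (pi Q')). rewrite (Rmult_comm _ (g Q')).
  apply Rmult_le_compat_l; auto.
  rewrite Forall_forall in VB. specialize (Hst Q' (VB Q' HQ')).
  apply (lub_ub _ _ _ I Hst HI VI).
Qed.

Lemma succs_len N Amax Sset Q Q' :
  (forall S, In S Sset -> length S = N) -> length Q = N ->
  In Q' (succs N Amax Sset Q) -> length Q' = N.
Proof.
  intros HS HQ H. unfold succs in H. apply in_flat_map in H. destruct H as [S [HSm H]].
  apply in_map_iff in H. destruct H as [a [<- Ha]]. apply argmax_sub in HSm.
  apply length_next; auto. apply (vecs_prop _ _ _ Ha).
Qed.

Lemma phi_nonneg Sset c b Q :
  Sset <> [] -> (forall S, In S Sset -> dotR c (toR S) <= b) -> 0 <= phi Sset c b Q.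
Proof.
  intros Hne H. unfold phi. apply sumR_nonneg. intros S HS.
  apply Rmult_le_pos.
  - pose proof (argmax_ne Sset Q Hne). destruct (argmax Sset Q); [tauto|].
    left. apply Rinv_0_lt_compat, lt_0_INR. simpl; lia.
  - apply argmax_sub in HS. specialize (H S HS). lra.
Qed.

Lemma dot_nonneg2 c x : Forall (fun v => 0 <= v) c -> Forall (fun v => 0 <= v) x -> 0 <= dotR c x.
Proof.
  revert x. induction c as [|a c IH]; intros x Pc Px; [unfold dotR; simpl; lra|].
  destruct x as [|y x]; [unfold dotR; simpl; lra|].
  inversion Pc; inversion Px; subst. unfold dotR in *; simpl.
  specialize (IH x H2 H6). nra.
Qed.

Lemma core N Amax Sset pA lam c b eps pi :
  length c = N -> Forall (fun v => 0 <= v) c ->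
  (forall S, In S Sset -> length S = N /\ dotR c (toR S) <= b) ->
  Sset <> [] -> 0 < b -> 0 < eps ->
  valid_arrivals N Amax pA lam -> length lam = N -> dotR c lam = b - eps ->
  is_stationary N Amax Sset pA pi ->
  forall l, NoDup l -> Forall (fun Q => length Q = N) l ->
  sumR (map (fun Q => pi Q * phi Sset c b Q) l) <= eps.
Proof.
  intros Hc Pc HS Hne Hb He Hv Hl Hlam Hpi l Hnd Vl.
  pose proof Hpi as [Hp0 [_ [Hs1 _]]].
  assert (HSb : forall S, In S Sset -> dotR c (toR S) <= b) by (intros; apply HS; auto).
  set (V := fun Q : list nat => dotR c (toR Q)).
  assert (HV : forall Q, 0 <= V Q).
  { intros Q. apply dot_nonneg2; auto using toR_nonneg. }

  assert (Hphi : forall Q, 0 <= phi Sset c b Q) by (intros; apply phi_nonneg; auto).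
  assert (Hub : forall L, NoDup L -> Forall (fun Q => length Q = N) L -> sumR (map pi L) <= 1).
  { intros L H1 H2. apply (lub_ub _ _ _ L Hs1 H1 H2). }
  assert (Hpos : forall L, 0 <= sumR (map pi L)) by (intros; apply sumR_nonneg; auto).
  pose proof (C1_nonneg c N Amax Pc) as HC.
  apply le_eps. intros eta Heta.
  set (d1 := eta / (4 * b)).
  assert (Hd1 : 0 < d1) by (unfold d1; apply Rdiv_lt_0_compat; lra).
  destruct (lub_approx _ _ _ d1 Hs1 Hd1) as [L1 [ND1 [VL1 HL1]]].
  set (T := Cup c N Amax + sumR (map V L1) + 1).
  assert (HVL : 0 <= sumR (map V L1)) by (apply sumR_nonneg; auto).
  assert (HT : 0 < T) by (unfold T; lra).
  set (d2 := eta / (2 * T)).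
  assert (Hd2 : 0 < d2) by (unfold d2; apply Rdiv_lt_0_compat; lra).
  destruct (lub_approx _ _ _ d2 Hs1 Hd2) as [L2 [ND2 [VL2 HL2]]].
  set (dec := list_eq_dec Nat.eq_dec).
  set (I := nodup dec (l ++ L1 ++ L2)).
  assert (NDI : NoDup I) by apply NoDup_nodup.
  assert (VI : Forall (fun Q => length Q = N) I).
  { apply Forall_forall. intros Q HQ. apply nodup_In in HQ. rewrite Forall_forall in Vl, VL1, VL2.
    apply in_app_or in HQ; destruct HQ as [HQ|HQ]; auto. apply in_app_or in HQ; destruct HQ; auto. }
  assert (inI : forall Q, In Q l \/ In Q L1 \/ In Q L2 -> In Q I).
  { intros Q HQ. apply nodup_In. apply in_or_app. destruct HQ as [H|[H|H]]; auto; right; apply in_or_app; auto. }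
  set (g := fun Q => Rmin (V Q) T).
  set (B' := nodup dec (filter (fun x => if in_dec dec x I then false else true) (flat_map (succs N Amax Sset) I))).
  set (B := I ++ B').
  assert (NDB : NoDup B).
  { apply NoDup_app; auto. apply NoDup_nodup. intros x Hx Hx'. apply nodup_In in Hx'.
    apply filter_In in Hx'. destruct Hx' as [_ E]. destruct (in_dec dec x I); [discriminate|tauto]. }
  assert (HSl : forall S, In S Sset -> length S = N) by (intros; apply HS; auto).
  assert (VB : Forall (fun Q => length Q = N) B).
  { apply Forall_app; split; auto. apply Forall_forall. intros x Hx. apply nodup_In in Hx.
    apply filter_In in Hx. destruct Hx as [Hx _]. apply in_flat_map in Hx. destruct Hx as [Q [HQ Hx]].
    rewrite Forall_forall in VI. apply (succs_len N Amax Sset Q x); auto. }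
  assert (SB : forall Q, In Q I -> incl (succs N Amax Sset Q) B).
  { intros Q HQ x Hx. apply in_or_app. destruct (in_dec dec x I); auto. right.
    apply nodup_In, filter_In. split. apply in_flat_map; eauto. destruct (in_dec dec x I); tauto. }
  assert (Hg : forall Q, 0 <= g Q) by (intros; unfold g; apply Rmin_glb; auto; lra).
  pose proof (stat_ineq N Amax Sset pA pi g I B Hpi NDI VI NDB VB SB Hg) as Hst.
  unfold B in Hst. rewrite map_app, sumR_app in Hst.
  assert (HB'1 : sumR (map (fun Q' => pi Q' * g Q') B') <= T * sumR (map pi B')).
  { rewrite <- sumR_mull. apply sumR_le. intros. unfold g. pose proof (Rmin_r (V x) T).
    pose proof (Hp0 x). nra. }
  assert (HB'2 : sumR (map pi I) + sumR (map pi B') <= 1).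
  { rewrite <- sumR_app, <- map_app. apply Hub; auto. }
  set (bad := fun Q => if Rle_dec (V Q) (T - Cup c N Amax) then 0 else 1).
  assert (Hdr : sumR (map (fun Q => pi Q * phi Sset c b Q) I) <=
     sumR (map (fun Q => eps * pi Q + pi Q * Pg N Amax Sset pA g Q - pi Q * g Q + 2 * b * (pi Q * bad Q)) I)).
  { apply sumR_le. intros Q HQ. rewrite Forall_forall in VI.
    pose proof (drift N Amax Sset pA lam c b eps T Q Hc Pc HS Hne ltac:(lra) ltac:(lra) Hv Hl Hlam (VI Q HQ)) as D.
    fold g in D. unfold bad. fold (V Q) in D. pose proof (Hp0 Q).
    change (Pg N Amax Sset pA (fun Q => Rmin (dotR c (toR Q)) T) Q) with (Pg N Amax Sset pA g Q) in D.
    change (Rmin (V Q) T) with (g Q) in D.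
    apply Rmult_le_compat_l with (r := pi Q) in D; auto. lra. }
  rewrite !sumR_plus, !sumR_minus, !sumR_mull in Hdr.
  assert (HBD : sumR (map (fun Q => pi Q * bad Q) I) <= 1 - sumR (map pi L1)).
  { apply Rle_trans with (sumR (map (fun Q => if (fun x => if in_dec dec x L1 then false else true) Q then pi Q else 0) I)).
    - apply sumR_le. intros Q HQ. unfold bad. pose proof (Hp0 Q).
      destruct (in_dec dec Q L1) as [Hin|Hin].
      + destruct (Rle_dec (V Q) (T - Cup c N Amax)); [lra|].
        exfalso. apply n. pose proof (sumR_elem_le V L1 Q Hin ltac:(auto)). unfold T. lra.
      + destruct (Rle_dec _ _); lra.
    - rewrite sumR_filter. assert (sumR (map pi L1) + sumR (map pi (filter (fun x => if in_dec dec x L1 then false else true) I)) <= 1); [|lra].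
      rewrite <- sumR_app, <- map_app. apply Hub.
      + apply NoDup_app; auto. apply NoDup_filter; auto. intros x Hx Hx'. apply filter_In in Hx'.
        destruct Hx' as [_ E]. destruct (in_dec dec x L1); [discriminate|tauto].
      + apply Forall_app; split; auto. apply Forall_forall. intros x Hx. apply filter_In in Hx.
        rewrite Forall_forall in VI; apply VI; tauto. }
  assert (HP : sumR (map pi L2) <= sumR (map pi I)).
  { apply sumR_incl; auto. intros x Hx; apply inI; auto. }
  assert (HP1 : sumR (map pi I) <= 1) by (apply Hub; auto).
  assert (Hl_I : sumR (map (fun Q => pi Q * phi Sset c b Q) l) <= sumR (map (fun Q => pi Q * phi Sset c b Q) I)).
  { apply sumR_incl; auto. intros x Hx; apply inI; auto. intros; apply Rmult_le_pos; auto. }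
  assert (E1 : T * d2 = eta / 2) by (unfold d2; field; lra).
  assert (E2 : 2 * b * d1 = eta / 2) by (unfold d1; field; lra).
  assert (eps * sumR (map pi I) <= eps) by nra.
  assert (T * (1 - sumR (map pi I)) <= T * d2) by nra.
  assert (2 * b * sumR (map (fun Q => pi Q * bad Q) I) <= 2 * b * d1) by nra.
  rewrite (sumR_plus (fun x => eps * pi x) (fun x => pi x * Pg N Amax Sset pA g x)) in Hdr.
  rewrite (sumR_mull pi eps) in Hdr.
  assert (T * sumR (map pi B') <= T * (1 - sumR (map pi I))) by (apply Rmult_le_compat_l; lra).
  lra.
Qed.

Lemma combine_map_self {A B} (f : A -> B) l :
  combine (map f l) l = map (fun x => (f x, x)) l.
Proof. induction l; simpl; auto. rewrite IHl; auto. Qed.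

Lemma vertex_hull N Sset S :
  NoDup Sset -> In S Sset -> length S = N -> in_conv_hull N Sset (toR S).
Proof.
  intros Hnd HS HL. split; [rewrite length_toR; auto|].
  exists (map (fun S' => if list_eq_dec Nat.eq_dec S' S then 1 else 0) Sset).
  split; [apply length_map|]. split.
  { apply Forall_forall. intros x Hx. apply in_map_iff in Hx. destruct Hx as [S' [<- _]].
    destruct (list_eq_dec _ _ _); lra. }
  split.
  { rewrite (sumR_single _ Sset S); auto.
    - destruct (list_eq_dec _ _ _); congruence.
    - intros y Hy. destruct (list_eq_dec _ _ _); congruence. }
  intros n Hn. rewrite combine_map_self, map_map. simpl.
  rewrite (sumR_single (fun x => (if list_eq_dec Nat.eq_dec x S then 1 else 0) * INR (nth n x 0%nat)) Sset S); auto.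
  - rewrite nth_toR. destruct (list_eq_dec _ _ _); [lra|congruence].
  - intros y Hy. destruct (list_eq_dec _ _ _); [congruence|lra].
Qed.

Lemma dot_vsub c x e : length x = length c ->
  dotR c (vsub x (map (Rmult e) c)) = dotR c x - e * dotR c c.
Proof.
  revert x. induction c as [|a c IH]; intros x Hx.
  - unfold dotR, vsub; destruct x; simpl; lra.
  - destruct x as [|y x]; simpl in Hx; [lia|]. injection Hx as Hx.
    unfold dotR, vsub in *; simpl. rewrite IH by auto. lra.
Qed.

Lemma length_vsub x y : length (vsub x y) = Nat.min (length x) (length y).
Proof. unfold vsub. rewrite length_map, length_combine. reflexivity. Qed.

Lemma rpow_le x B r : 0 <= x <= B -> 1 < r -> rpow x r <= Rpower B (r - 1) * x.
Proof.
  intros Hx Hr. unfold rpow. destruct (Rle_dec x 0).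
  - assert (0 < Rpower B (r-1)) by (unfold Rpower; apply exp_pos). nra.
  - replace r with (1 + (r - 1)) at 1 by ring. rewrite Rpower_plus, Rpower_1 by lra.
    rewrite Rmult_comm. apply Rmult_le_compat_r; [lra|]. apply Rle_Rpower_l; lra.
Qed.

Theorem claim1 (N Amax Smax : nat) (Sset : list (list nat)) (K : nat)
  (c : nat -> list R) (b : nat -> R) (k : nat) (lamk : list R)
  (pA : R -> nat -> nat -> R) (eps_max : R) :
  (0 < N)%nat ->
  Sset <> [] -> NoDup Sset ->
  (forall S, In S Sset -> length S = N /\ forall n, (nth n S 0 <= Smax)%nat) ->
  (forall j, (j < K)%nat ->
     length (c j) = N /\ Forall (fun x => 0 <= x) (c j) /\ norm2 (c j) = 1 /\ 0 < b j) ->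
  (forall r, length r = N ->
     (in_conv_hull N Sset r <->
      (Forall (fun x => 0 <= x) r /\ forall j, (j < K)%nat -> dotR (c j) r <= b j))) ->
  (k < K)%nat ->
  in_rel_interior N (face N Sset (c k) (b k)) lamk ->
  0 < eps_max ->
  (forall eps, 0 < eps < eps_max ->
     valid_arrivals N Amax (pA eps) (vsub lamk (map (Rmult eps) (c k)))) ->
  forall r', 1 < r' ->
  exists beta2 eps0, 0 < eps0 /\
    forall eps, 0 < eps < eps0 ->
    forall pi, is_stationary N Amax Sset (pA eps) pi ->
    exists e,
      has_sum_on (fun Q => length Q = N)
                 (fun Q => pi Q * unused_moment Sset (c k) (b k) r' Q) e /\
      e <= beta2 * eps.
Proof.
  intros HN Hne Hnd HSset Hc Hhull Hk Hrel Heps Harr r' Hr'.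
  destruct (Hc k Hk) as [Lc [Pc [Nc Hb]]].
  assert (Hcc : dotR (c k) (c k) = 1).
  { unfold norm2 in Nc. destruct (Rle_dec 0 (dotR (c k) (c k))).
    - rewrite <- (sqrt_sqrt _ r), Nc. lra.
    - rewrite sqrt_neg_0 in Nc by lra. lra. }
  destruct Hrel as [[[Llam _] Hface] _].
  assert (HS : forall S, In S Sset -> length S = N /\ dotR (c k) (toR S) <= b k).
  { intros S HS. destruct (HSset S HS) as [LS _]. split; auto.
    assert (Hl : length (toR S) = N) by (rewrite length_toR; auto).
    apply (proj1 (Hhull _ Hl) (vertex_hull N Sset S Hnd HS LS)); auto. }
  set (beta := Rpower (b k) (r' - 1)).
  assert (Hbeta : 0 < beta) by (unfold beta, Rpower; apply exp_pos).
  exists beta, eps_max. split; auto. intros eps Heps' pi Hpi.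
  set (lam := vsub lamk (map (Rmult eps) (c k))).
  pose proof (Harr eps Heps') as Hv.
  assert (Hl : length lam = N) by (unfold lam; rewrite length_vsub, length_map; lia).
  assert (Hlam : dotR (c k) lam = b k - eps) by (unfold lam; rewrite dot_vsub by lia; rewrite Hface, Hcc; lra).
  pose proof (core N Amax Sset (pA eps) lam (c k) (b k) eps pi Lc Pc HS Hne Hb ltac:(lra) Hv Hl Hlam Hpi) as Hcore.
  pose proof Hpi as [Hp0 _].
  assert (Hum : forall Q, unused_moment Sset (c k) (b k) r' Q <= beta * phi Sset (c k) (b k) Q).
  { intros Q. unfold unused_moment, phi; cbv zeta. rewrite <- sumR_mull. apply sumR_le.
    intros S HSm. pose proof (argmax_ne Sset Q Hne) as HM.
    assert (0 <= / INR (length (argmax Sset Q))).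
    { destruct (argmax Sset Q); [tauto|]. left. apply Rinv_0_lt_compat, lt_0_INR. simpl; lia. }
    apply argmax_sub in HSm. destruct (HS S HSm) as [LS DS].
    assert (0 <= dotR (c k) (toR S)) by (apply (dot_nonneg (c k) _ N); rewrite ?length_toR; auto using toR_nonneg).
    pose proof (rpow_le (b k - dotR (c k) (toR S)) (b k) r' ltac:(lra) Hr') as HR. fold beta in HR.
    nra. }
  assert (Hbnd : forall l, NoDup l -> Forall (fun Q => length Q = N) l ->
    sumR (map (fun Q => pi Q * unused_moment Sset (c k) (b k) r' Q) l) <= beta * eps).
  { intros l H1 H2. apply Rle_trans with (sumR (map (fun Q => beta * (pi Q * phi Sset (c k) (b k) Q)) l)).
    - apply sumR_le. intros Q _. specialize (Hum Q). specialize (Hp0 Q). nra.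
    - rewrite sumR_mull. apply Rmult_le_compat_l; [lra|]. apply Hcore; auto. }
  set (E := fun r => exists l : list (list nat),
             NoDup l /\ Forall (fun Q => length Q = N) l /\
             r = sumR (map (fun Q => pi Q * unused_moment Sset (c k) (b k) r' Q) l)).
  assert (HE : is_upper_bound E (beta * eps)).
  { intros r [l [H1 [H2 ->]]]. apply Hbnd; auto. }
  destruct (completeness E) as [e He].
  - exists (beta * eps); auto.
  - exists 0. exists []. split; [constructor|]. split; [constructor|]. reflexivity.
  - exists e. split; [exact He|]. apply He; auto.
Qed.
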